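(* (i) $\mathcal{A}(r,n)^{\mathbf T}=\mathcal{A}(r,n)^{\mathbf T_{r+2}}$. (ii) A fixed point $\alpha_\mu\in\mathcal{A}(r,n)^{\mathbf T}$ belongs to $\mathcal{Q}(r,n)^{\mathbf T}$ (viewed inside $\mathcal{A}(r,n)$ via $\imath$) if and only if the $r$-partition $\mu$ is nested, i.e. $\mu_r\subseteq\mu_{r-1}\subseteq\cdots\subseteq\mu_1$ as Young diagrams. Hence $\mathcal{Q}(r,n)^{\mathbf T}$ is finite and in bijection with nested $r$-partitions of $n$. (iii) The closed embedding $\mathcal{Q}_0(r,n)\hookrightarrow\mathcal{Q}(r,n)$ induces an isomorphism of $\mathbf T$-fixed loci. Hence $\mathcal{Q}_0(r,n)^{\mathbf T}$ is also finite and in bijection with nested $r$-partitions of $n$.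
   Context: **Moduli spaces.** $\mathcal{A}(r,n)$ is the moduli space of stable ADHM data $(V,B_1,B_2,I,J)$ with $\dim V=n$, $V_\infty=\mathbb{C}^r$ (basis $e_a$), $[B_1,B_2]+IJ=0$, and no proper $B_1,B_2$-invariant subspace containing $\mathrm{Im}\,I$. It is identified with the moduli space of rank $r$ framed torsion-free sheaves on $\mathbb{P}^2$ with $c_2=n$. $\mathcal{Q}(r,n)$ is the moduli space of framed cyclic representations $(V,B_1,B_2,B_3,I,J)$. These satisfy $[B_1,B_2]+IJ=0$, $JB_3=A_rJ$, $B_3I=IA_r$ and $[B_3,B_1]=[B_3,B_2]=0$, where $A_re_a=e_{a+1}$ and $e_{r+1}=0$, and no proper nonzero $B_1,B_2,B_3$-invariant subspace contains $\mathrm{Im}\,I$. The closed embedding $\imath:\mathcal{Q}(r,n)\to\mathcal{A}(r,n)$ forgets $B_3$. $\mathcal{Q}_0(r,n)\subset\mathcal{Q}(r,n)$ is the closed subscheme where $J=0$. **Torus actions.** $\mathbf{T}_{r+2}=(\mathbb{C}^\times)^2\times(\mathbb{C}^\times)^r$ acts on $\mathcal{A}(r,n)$ by $(t_1,t_2,u)\cdot(B_1,B_2,I,J)=(t_1B_1,t_2B_2,Iu^{-1},t_1t_2uJ)$, where $u=\mathrm{diag}(u_1,\dots,u_r)$. Its fixed points $\alpha_\mu$ are finitely many and indexed by $r$-partitions $\mu=(\mu_1,\dots,\mu_r)$ of $n$. The point $\alpha_\mu$ corresponds to the framed sheaf $\bigoplus_aI_{Z_{\mu_a}}$, where $I_{Z_{\mu_a}}$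 is the monomial ideal of $\mu_a$ in $\mathbb{A}^2=\mathbb{P}^2\setminus\{z_0=0\}$. $\mathbf{T}=(\mathbb{C}^\times)^3$ embeds in $\mathbf{T}_{r+2}$ by $(t_1,t_2,t_3)\mapsto(t_1,t_2,(t_3^{1-a})_{1\leq a\leq r})$. Writing $I_a=I(e_a)$ and $J_a$ for the components of $J$, $\mathbf{T}$ acts on $\mathcal{Q}(r,n)$ by $(t_i)\cdot(B_i,I_a,J_a)=(t_iB_i,\,t_3^{a-1}I_a,\,t_1t_2t_3^{1-a}J_a)$ for $1\leq i\leq3$. On $\mathcal{A}(r,n)$ it acts by the same formula with $B_3$ omitted. *)

(* Defs.v *)
From HB Require Import structures.
From mathcomp Require Import all_boot all_order all_algebra.
Set Implicit Arguments. Unset Strict Implicit. Unset Printing Implicit Defensive.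
Import Order.TTheory GRing.Theory Num.Theory.
Local Open Scope ring_scope.

(* Conventions: V = F^n is realised as row vectors 'rV[F]_n, V_oo = F^r as
   'rV[F]_r, and a linear map X -> Y is a matrix acting on the RIGHT
   (v |-> v *m M).  Hence the operator composition X o Y is the matrix
   product Y *m X.  Row a of I is I(e_a) (0-based index a <-> e_{a+1}),
   column a of J is the component J_a. *)

Section ADHM.
Variables (F : closedFieldType) (r n : nat).

Record adhm := ADHM {
  aB1 : 'M[F]_n; aB2 : 'M[F]_n; aI : 'M[F]_(r, n); aJ : 'M[F]_(n, r) }.

Record cyc := CYC {
  cB1 : 'M[F]_n; cB2 : 'M[F]_n; cB3 : 'M[F]_n;
  cI : 'M[F]_(r, n); cJ : 'M[F]_(n, r) }.

(* A_r e_a = e_{a+1}, e_{r+1} = 0 *)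
Definition shiftA : 'M[F]_r := \matrix_(i, j) ((j == i.+1 :> nat)%:R).

(* [B1,B2] + IJ = 0 *)
Definition adhm_eq (B1 B2 : 'M[F]_n) (I : 'M[F]_(r, n)) (J : 'M[F]_(n, r)) :=
  B2 *m B1 - B1 *m B2 + J *m I = 0.

Definition A_stable (x : adhm) :=
  forall S : 'M[F]_n, (aI x <= S)%MS -> stablemx S (aB1 x) ->
    stablemx S (aB2 x) -> row_full S.

Definition A_point (x : adhm) :=
  adhm_eq (aB1 x) (aB2 x) (aI x) (aJ x) /\ A_stable x.

Definition Q_stable (y : cyc) :=
  forall S : 'M[F]_n, (cI y <= S)%MS -> stablemx S (cB1 y) ->
    stablemx S (cB2 y) -> stablemx S (cB3 y) -> row_full S.

Definition Q_point (y : cyc) :=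
  adhm_eq (cB1 y) (cB2 y) (cI y) (cJ y) /\
  [/\
      cB3 y *m cJ y = cJ y *m shiftA,
      cI y *m cB3 y = shiftA *m cI y,
      cB1 y *m cB3 y = cB3 y *m cB1 y,
      cB2 y *m cB3 y = cB3 y *m cB2 y
    & Q_stable y].

Definition Q0_point (y : cyc) := Q_point y /\ cJ y = 0.

Definition forget (y : cyc) : adhm := ADHM (cB1 y) (cB2 y) (cI y) (cJ y).

(* points of the moduli spaces = GL(V)-orbits *)
Definition isoA (x x' : adhm) :=
  exists2 g : 'M[F]_n, g \in unitmx &
    [/\ aB1 x' = invmx g *m aB1 x *m g, aB2 x' = invmx g *m aB2 x *m g,
        aI x' = aI x *m g & aJ x' = invmx g *m aJ x].

Definition isoQ (y y' : cyc) :=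
  exists2 g : 'M[F]_n, g \in unitmx &
    [/\ cB1 y' = invmx g *m cB1 y *m g, cB2 y' = invmx g *m cB2 y *m g,
        cB3 y' = invmx g *m cB3 y *m g,
        cI y' = cI y *m g & cJ y' = invmx g *m cJ y].

Definition actA (t1 t2 : F) (u : 'I_r -> F) (x : adhm) : adhm :=
  ADHM (t1 *: aB1 x) (t2 *: aB2 x)
       (\matrix_(a, k) ((u a)^-1 * aI x a k))
       (\matrix_(k, a) (t1 * t2 * u a * aJ x k a)).

(* T = (C^x)^3 embedded by u_a = t3^(1-a)  (0-based index a : u = t3^-a) *)
Definition Tu (t3 : F) : 'I_r -> F := fun a => t3 ^- a.

Definition actQ (t1 t2 t3 : F) (y : cyc) : cyc :=
  CYC (t1 *: cB1 y) (t2 *: cB2 y) (t3 *: cB3 y)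
      (\matrix_(a, k) (t3 ^+ a * cI y a k))
      (\matrix_(k, a) (t1 * t2 * t3 ^- a * cJ y k a)).

Definition fixedA_T (x : adhm) :=
  forall t1 t2 t3 : F, t1 != 0 -> t2 != 0 -> t3 != 0 ->
    isoA (actA t1 t2 (Tu t3) x) x.

Definition fixedA_Tr2 (x : adhm) :=
  forall (t1 t2 : F) (u : 'I_r -> F), t1 != 0 -> t2 != 0 ->
    (forall a, u a != 0) -> isoA (actA t1 t2 u x) x.

Definition fixedQ_T (y : cyc) :=
  forall t1 t2 t3 : F, t1 != 0 -> t2 != 0 -> t3 != 0 ->
    isoQ (actQ t1 t2 t3 y) y.

End ADHM.

(* Partitions / Young diagrams: a partition is a nonincreasing list of
   positive parts; row i of the diagram has length (nth 0 p i). *)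
Definition is_partition (p : seq nat) :=
  sorted geq p && all (fun k => 0 < k)%N p.

Definition rpartition (r n : nat) (m : r.-tuple (seq nat)) :=
  all is_partition m /\ (\sum_(a < r) sumn (tnth m a))%N = n.

Definition subdiagram (p q : seq nat) := forall i, (nth 0 p i <= nth 0 q i)%N.

Definition nested (r : nat) (m : r.-tuple (seq nat)) :=
  forall (a : 'I_r) (h : (a.+1 < r)%N), subdiagram (tnth m (Ordinal h)) (tnth m a).

(* boxes (i,j) of a diagram, i = row, j < length of row i;
   the box (i,j) corresponds to the monomial x^i y^j of C[x,y]/I_Z *)
Definition boxes (p : seq nat) : seq (nat * nat) :=
  flatten [seq [seq (i, j) | j <- iota 0 (nth 0 p i)] | i <- iota 0 (size p)].

Definition rboxes (r : nat) (m : r.-tuple (seq nat)) : seq (nat * (nat * nat)) :=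
  flatten [seq [seq (val a, b) | b <- boxes (tnth m a)] | a <- enum 'I_r].

(* The fixed point alpha_mu: V = (+)_a C[x,y]/I_{Z_{mu_a}} with the monomial
   basis indexed by rboxes, B1 / B2 multiplication by x / y, I(e_a) = 1 in the
   a-th summand, J = 0. *)
Definition alpha (F : closedFieldType) (r n : nat) (m : r.-tuple (seq nat))
  : adhm F r n :=
  let L := rboxes m in
  let idx (k : 'I_n) := nth (0%N, (0%N, 0%N)) L k in
  ADHM
    (\matrix_(k, l) ((idx l == ((idx k).1, ((idx k).2.1.+1, (idx k).2.2)))%:R))
    (\matrix_(k, l) ((idx l == ((idx k).1, ((idx k).2.1, (idx k).2.2.+1)))%:R))
    (\matrix_(a, l) ((idx l == (val a, (0%N, 0%N)))%:R))
    0.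

(* Main.v *)
Require Import Defs.
From HB Require Import structures.
From mathcomp Require Import all_boot all_order all_algebra.
From mathcomp Require Import ring.
Import Order.TTheory GRing.Theory Num.Theory.

Module A1.
Set Implicit Arguments. Unset Strict Implicit. Unset Printing Implicit Defensive.
Import Order.TTheory GRing.Theory Num.Theory.
Local Open Scope ring_scope.

Section Gen.
Variables (F : closedFieldType) (r n : nat).
Implicit Types (g : 'M[F]_n) (I : 'M[F]_(r, n)).

Lemma conj_of g (A B : 'M[F]_n) : g \in unitmx -> g *m A = B *m g ->
  A = invmx g *m B *m g.
Proof. by move=> gu e; rewrite -mulmxA -e mulmxA mulVmx // mul1mx. Qed.

Lemma conj_eq g (A B : 'M[F]_n) : g \in unitmx -> A = invmx g *m B *m g ->
  g *m A = B *m g.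
Proof. by move=> gu ->; rewrite !mulmxA mulmxV // mul1mx. Qed.

Definition Irow I (a : nat) : 'rV[F]_n := \sum_(b < r | b == a :> nat) row b I.

Lemma IrowE I (b : 'I_r) : Irow I b = row b I.
Proof.
rewrite /Irow (big_pred1 b) // => c; exact: (inj_eq val_inj).
Qed.

Lemma Irow_out I a : (r <= a)%N -> Irow I a = 0.
Proof.
move=> ra; rewrite /Irow big_pred0 // => c.
by apply/negbTE; rewrite neq_ltn (leq_trans (ltn_ord c) ra).
Qed.

Lemma IrowM I (M : 'M[F]_n) a : Irow (I *m M) a = Irow I a *m M.
Proof. by rewrite /Irow mulmx_suml; apply: eq_bigr => b _; rewrite row_mul. Qed.

Lemma Irow_shift I a : Irow (shiftA F r *m I) a = Irow I a.+1.
Proof.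
case: (ltnP a r) => ar; last by rewrite !Irow_out // ltnW.
rewrite (IrowE _ (Ordinal ar)) row_mul.
case: (ltnP a.+1 r) => a1r; last first.
  rewrite Irow_out //; apply/rowP => l; rewrite !mxE big1 // => c _.
  rewrite !mxE /= (_ : (c == a.+1 :> nat) = false) ?mul0r //.
  by apply/negbTE; rewrite neq_ltn (leq_trans (ltn_ord c) a1r).
rewrite (IrowE _ (Ordinal a1r)); apply/rowP => l; rewrite !mxE.
rewrite (bigD1 (Ordinal a1r)) //= !mxE eqxx mul1r big1 ?addr0 // => c /negbTE cn.
by rewrite !mxE; move: cn; rewrite -(inj_eq val_inj) /= => ->; rewrite mul0r.
Qed.

Lemma Irow_sub I a : (Irow I a <= I)%MS.
Proof.
by apply: summx_sub => b _; rewrite row_sub.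
Qed.

Definition wv B1 B2 I (t : nat * (nat * nat)) : 'rV[F]_n :=
  Irow I t.1 *m B1 ^+ t.2.1 *m B2 ^+ t.2.2.

Lemma wv_sub B1 B2 I (S : 'M[F]_n) t : (I <= S)%MS -> stablemx S B1 ->
  stablemx S B2 -> (wv B1 B2 I t <= S)%MS.
Proof.
case: t => a [i j] IS s1 s2; rewrite /wv /=.
elim: j => [|j IH].
  rewrite expr0 mulmx1; elim: i => [|i IH].
    by rewrite expr0 mulmx1 (submx_trans (Irow_sub _ _) IS).
  by rewrite exprSr -mulmxE mulmxA (submx_trans (submxMr _ IH)).
by rewrite exprSr -mulmxE mulmxA (submx_trans (submxMr _ IH)).
Qed.

End Gen.

End A1.
Import A1.

Module A2.
Set Implicit Arguments. Unset Strict Implicit. Unset Printing Implicit Defensive.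
Import Order.TTheory GRing.Theory Num.Theory.
Local Open Scope ring_scope.

Section Kry.
Variables (F : closedFieldType) (r n : nat).
Variables (B1 B2 : 'M[F]_n) (I : 'M[F]_(r, n)).

Fixpoint Kr k : 'M[F]_n :=
  if k is k'.+1 then (Kr k' + Kr k' *m B1 + Kr k' *m B2)%MS else <<I>>%MS.

Lemma Kr_mono k : (Kr k <= Kr k.+1)%MS.
Proof. by rewrite /= -addsmxA addsmxSl. Qed.

Lemma I_Kr k : (I <= Kr k)%MS.
Proof. elim: k => [|k IH]; [by rewrite /= genmxE | exact: submx_trans IH (Kr_mono k)]. Qed.

Lemma Kr_B1 k : (Kr k *m B1 <= Kr k.+1)%MS.
Proof. by rewrite /= -addsmxA (submx_trans (addsmxSl _ _) (addsmxSr _ _)). Qed.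

Lemma Kr_B2 k : (Kr k *m B2 <= Kr k.+1)%MS.
Proof. by rewrite /= addsmxSr. Qed.

Lemma Kr_sub (S : 'M[F]_n) k : (I <= S)%MS -> stablemx S B1 -> stablemx S B2 ->
  (Kr k <= S)%MS.
Proof.
move=> IS s1 s2; elim: k => [|k IH] /=; first by rewrite genmxE.
rewrite !addsmx_sub IH /= (submx_trans (submxMr _ IH) s1).
by rewrite (submx_trans (submxMr _ IH) s2).
Qed.

Lemma Kr_phi k : (Kr k.+1 <= Kr k)%MS -> (Kr k.+2 <= Kr k.+1)%MS.
Proof.
move=> h; rewrite [Kr k.+2]/= [X in (_ <= X)%MS]/=.
by rewrite !addsmxS // submxMr.
Qed.

Lemma Kr_sat : (Kr n.+1 <= Kr n)%MS.
Proof.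
have key : forall k, (exists2 m, (m < k)%N & (Kr m.+1 <= Kr m)%MS) \/ (k <= \rank (Kr k))%N.
  elim=> [|k [[m mk h]|IH]]; [by right | by left; exists m => //; exact: ltnW |].
  case h: (Kr k.+1 <= Kr k)%MS; first by left; exists k.
  right; apply: leq_ltn_trans IH _.
  by rewrite (ltn_leqif (mxrank_leqif_sup (Kr_mono k))) h.
case: (key n.+1) => [[m mk h]|]; last by rewrite ltnNge rank_leq_col.
have: forall d, (Kr (m + d).+1 <= Kr (m + d))%MS.
  by elim=> [|d IH]; rewrite ?addn0 // addnS Kr_phi.
by move/(_ (n - m)%N); rewrite subnKC // -ltnS.
Qed.

Lemma Kr_stable1 : stablemx (Kr n) B1.
Proof. exact: submx_trans (Kr_B1 n) Kr_sat. Qed.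
Lemma Kr_stable2 : stablemx (Kr n) B2.
Proof. exact: submx_trans (Kr_B2 n) Kr_sat. Qed.

Lemma Kr_B3 (B3 : 'M[F]_n) k : (I *m B3 <= I)%MS -> B1 *m B3 = B3 *m B1 ->
  B2 *m B3 = B3 *m B2 -> (Kr k *m B3 <= Kr k)%MS.
Proof.
move=> IB c1 c2; elim: k => [|k IH] /=.
  by rewrite genmxE (eqmxMr _ (genmxE I)).
rewrite addsmxMr addsmx_sub; apply/andP; split.
  rewrite addsmxMr addsmx_sub; apply/andP; split.
    by apply: submx_trans IH _; rewrite -addsmxA addsmxSl.
  rewrite -mulmxA c1 mulmxA; apply: submx_trans (submxMr _ IH) _.
  by rewrite -addsmxA (submx_trans (addsmxSl _ _) (addsmxSr _ _)).
by rewrite -mulmxA c2 mulmxA (submx_trans (submxMr _ IH)) // addsmxSr.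
Qed.

End Kry.

End A2.
Import A2.

Module A3.
Set Implicit Arguments. Unset Strict Implicit. Unset Printing Implicit Defensive.
Import Order.TTheory GRing.Theory Num.Theory.
Local Open Scope ring_scope.

Notation trip := (nat * (nat * nat))%type.
Definition tdef : trip := (0%N, (0%N, 0%N)).

Section Ind.
Variables (F : closedFieldType) (m : nat) (L : seq trip).
Hypotheses (sL : size L = m) (uL : uniq L).

Definition idx (k : 'I_m) : trip := nth tdef L k.
Definition ind (t : trip) : 'rV[F]_m := \row_l ((idx l == t)%:R).
Definition mxL p (phi : trip -> 'rV[F]_p) : 'M[F]_(m, p) := \matrix_l phi (idx l).

Lemma idx_mem k : idx k \in L.
Proof. by rewrite /idx mem_nth // sL. Qed.

Lemma idx_inj : injective idx.
Proof.
move=> k l; rewrite /idx => /eqP; rewrite nth_uniq ?sL // => /eqP; exact: val_inj.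
Qed.

Lemma ind0 t : t \notin L -> ind t = 0.
Proof.
move=> tL; apply/rowP => l; rewrite !mxE.
by case: eqP => // e; move: tL; rewrite -e idx_mem.
Qed.

Lemma ind_idx k : ind (idx k) = delta_mx 0 k.
Proof.
apply/rowP => l; rewrite !mxE /= (inj_eq idx_inj).
by rewrite eq_sym.
Qed.

Lemma ind_nz t : t \in L -> ind t != 0.
Proof.
move=> tL; have ik : (index t L < m)%N by rewrite -sL index_mem.
have e : idx (Ordinal ik) = t by rewrite /idx nth_index.
apply/eqP => /rowP /(_ (Ordinal ik)); rewrite !mxE e eqxx => /eqP.
by rewrite oner_eq0.
Qed.

Lemma ind_mxL p (phi : trip -> 'rV[F]_p) t :
  ind t *m mxL phi = if t \in L then phi t else 0.
Proof.
rewrite mulmx_sum_row.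
case: ifP => tL; last first.
  rewrite big1 // => l _; rewrite !mxE.
  by case: eqP => e; [move: tL; rewrite -e idx_mem | rewrite scale0r].
have ik : (index t L < m)%N by rewrite -sL index_mem.
have e : idx (Ordinal ik) = t by rewrite /idx nth_index.
rewrite (bigD1 (Ordinal ik)) //= big1 ?addr0.
  by rewrite !mxE e eqxx scale1r rowK e.
move=> l lk; rewrite !mxE -e (inj_eq idx_inj) (negbTE lk) scale0r //.
Qed.

Lemma row_mxL p (phi : trip -> 'rV[F]_p) k : row k (mxL phi) = phi (idx k).
Proof. by rewrite rowK. Qed.

Lemma row_ind p (A : 'M[F]_(m, p)) k : row k A = ind (idx k) *m A.
Proof. by rewrite ind_idx rowE. Qed.

Lemma mx_ind_eq p (A B : 'M[F]_(m, p)) :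
  (forall t, t \in L -> ind t *m A = ind t *m B) -> A = B.
Proof.
move=> h; apply/row_matrixP => k; rewrite !row_ind; exact: h (idx_mem k).
Qed.

Lemma mxL_ind : mxL ind = 1%:M.
Proof.
by apply/row_matrixP => k; rewrite row_mxL ind_idx rowE mulmx1.
Qed.

End Ind.

End A3.
Import A3.

Module A4.
Set Implicit Arguments. Unset Strict Implicit. Unset Printing Implicit Defensive.

Lemma mem_boxes p i j : ((i, j) \in boxes p) = (j < nth 0 p i).
Proof.
apply/flatten_mapP/idP => [[i' i'p /mapP [j' j'in [-> ->]]]|jp].
  by move: j'in; rewrite mem_iota.
have ip : i < size p by rewrite ltnNge; apply/negP => h; move: jp; rewrite nth_default.
by exists i; rewrite ?mem_iota //; apply/mapP; exists j; rewrite ?mem_iota.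
Qed.

Lemma uniq_boxes p : uniq (boxes p).
Proof.
apply: allpairs_uniq_dep; first exact: iota_uniq.
  by move=> i _; exact: iota_uniq.
by move=> [x1 y1] [x2 y2] _ _ /= [e1]; move: y1 y2; rewrite e1 => y1 y2 /= ->.
Qed.

Lemma size_boxes p : size (boxes p) = sumn p.
Proof.
rewrite size_allpairs_dep.
rewrite (eq_map (fun i => size_iota 0 (nth 0 p i))).
by rewrite -/(mkseq _ _) mkseq_nth.
Qed.

Lemma mem_rboxes r (m : r.-tuple (seq nat)) a i j :
  ((a, (i, j)) \in rboxes m) = (a < r) && (j < nth 0 (nth [::] m a) i).
Proof.
apply/flatten_mapP/idP => [[a' _ /mapP [[i' j'] b ] [-> -> ->]]|/andP [ar jp]].
  by rewrite ltn_ord /= -(tnth_nth [::]) -mem_boxes.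
exists (Ordinal ar); first by rewrite mem_enum.
by apply/mapP; exists (i, j); rewrite // mem_boxes (tnth_nth [::]).
Qed.

Lemma rboxes_lt r (m : r.-tuple (seq nat)) t : t \in rboxes m -> t.1 < r.
Proof. by case: t => a [i j]; rewrite mem_rboxes => /andP []. Qed.

Lemma uniq_rboxes r (m : r.-tuple (seq nat)) : uniq (rboxes m).
Proof.
apply: allpairs_uniq_dep; first exact: enum_uniq.
  by move=> a _; exact: uniq_boxes.
by move=> [x1 y1] [x2 y2] _ _ /= [/val_inj e1]; move: y1 y2; rewrite e1 => y1 y2 /= ->.
Qed.

Lemma size_rboxes r (m : r.-tuple (seq nat)) :
  size (rboxes m) = \sum_(a < r) sumn (tnth m a).
Proof.
rewrite size_allpairs_dep sumnE big_map big_enum /=.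
by apply: eq_bigr => a _; rewrite size_boxes.
Qed.

Lemma part_mono p i : is_partition p -> nth 0 p i.+1 <= nth 0 p i.
Proof.
case/andP => sp _.
case: (ltnP i.+1 (size p)) => h; last by rewrite nth_default.
by move: sp => /(sortedP 0) sp; exact: sp i h.
Qed.

Lemma part_pos p i : is_partition p -> (0 < nth 0 p i) = (i < size p).
Proof.
case/andP => _ ap; case: (ltnP i (size p)) => h; last by rewrite nth_default.
by apply: (allP ap); rewrite mem_nth.
Qed.

Lemma part_eq p q : is_partition p -> is_partition q ->
  (forall i, nth 0 p i = nth 0 q i) -> p = q.
Proof.
move=> pp pq e.
have es : size p = size q.
  apply/eqP; rewrite eqn_leq; apply/andP; split; rewrite leqNgt; apply/negP => h.
    by move: h; rewrite -(part_pos _ pp) e (part_pos _ pq) ltnn.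
  by move: h; rewrite -(part_pos _ pq) -e (part_pos _ pp) ltnn.
by apply: (eq_from_nth (x0 := 0) es) => i _.
Qed.

Lemma count_down (Q : pred nat) N : (forall j, Q j.+1 -> Q j) ->
  (forall j, Q j -> j < N) -> forall j, Q j = (j < count Q (iota 0 N)).
Proof.
move=> dQ bQ j.
have allQ : forall k, Q k -> forall l, l <= k -> Q l.
  move=> k Qk l; elim: k Qk => [|k IH] Qk; first by rewrite leqn0 => /eqP ->.
  by rewrite leq_eqVlt => /orP [/eqP -> //|]; rewrite ltnS; apply: IH; apply: dQ.
case Qj: (Q j); apply/esym.
  have jN := bQ _ Qj.
  rewrite -(subnKC jN) iotaD count_cat.
  have -> : count Q (iota 0 j.+1) = j.+1.
    rewrite (eq_in_count (a2 := predT)) ?count_predT ?size_iota // => l.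
    by rewrite mem_iota add0n => /andP [_ lj]; apply: allQ Qj _ _.
  by rewrite leq_addr.
apply/negbTE; rewrite -leqNgt.
case: (ltnP j N) => jN; last first.
  by apply: leq_trans (count_size _ _) _; rewrite size_iota.
rewrite -(subnKC (ltnW jN)) iotaD count_cat.
have -> : count Q (iota (0 + j) (N - j)) = 0.
  apply/eqP; rewrite -leqn0 leqNgt -has_count; apply/hasP => [[l]].
  rewrite mem_iota add0n => /andP [jl _] Ql.
  by move: (allQ _ Ql _ jl); rewrite Qj.
by rewrite addn0 (leq_trans (count_size _ _)) // size_iota.
Qed.

Section Down.
Variables (P : nat -> nat -> bool) (N : nat).
Hypotheses (d1 : forall i j, P i.+1 j -> P i j) (d2 : forall i j, P i j.+1 -> P i j)
  (bnd : forall i j, P i j -> (i < N) && (j < N)).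

Definition crow i := count (P i) (iota 0 N).
Definition nrows := count (fun i => P i 0) (iota 0 N).
Definition dpart := mkseq crow nrows.

Lemma crowP i j : P i j = (j < crow i).
Proof.
apply: count_down => [k|k]; first exact: d2.
by case/bnd/andP.
Qed.

Lemma nrowsP i : P i 0 = (i < nrows).
Proof.
apply: (count_down (Q := fun i => P i 0)) => [k|k]; first exact: d1.
by case/bnd/andP.
Qed.

Lemma dpart_nth i : nth 0 dpart i = crow i.
Proof.
case: (ltnP i nrows) => h; first by rewrite nth_mkseq.
rewrite nth_default ?size_mkseq //.
apply/esym/eqP; rewrite -leqn0 leqNgt -crowP nrowsP.
by rewrite ltnNge h.
Qed.

Lemma dpart_mem i j : P i j = (j < nth 0 dpart i).
Proof. by rewrite dpart_nth crowP. Qed.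

Lemma dpart_part : is_partition dpart.
Proof.
apply/andP; split.
  apply/(sortedP 0) => i; rewrite size_mkseq => h.
  rewrite !dpart_nth /=.
  case e: (crow i.+1) => [//|c].
  by rewrite -crowP; apply: d1; rewrite crowP e.
apply/allP => c /mapP [i]; rewrite mem_iota add0n => /andP [_ h] ->.
by rewrite -crowP nrowsP.
Qed.

End Down.

End A4.
Import A4.

Module A5.
Set Implicit Arguments. Unset Strict Implicit. Unset Printing Implicit Defensive.
Import Order.TTheory GRing.Theory Num.Theory.
Local Open Scope ring_scope.

Definition s1 (t : trip) : trip := (t.1, (t.2.1.+1, t.2.2)).
Definition s2 (t : trip) : trip := (t.1, (t.2.1, t.2.2.+1)).
Definition s3 (t : trip) : trip := (t.1.+1, t.2).

Section Alpha.
Variables (F : closedFieldType) (r n : nat) (mu : r.-tuple (seq nat)).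
Hypothesis rp : rpartition n mu.

Local Notation L := (rboxes mu).
Lemma sL : size L = n.
Proof. by rewrite size_rboxes; case: rp. Qed.
Lemma uL : uniq L.
Proof. exact: uniq_rboxes. Qed.

Local Notation ind := (ind F n L).
Local Notation mxL := (@A3.mxL F n L _).
Local Notation al := (alpha F n mu).

Lemma part_mu a : (a < r)%N -> is_partition (nth [::] mu a).
Proof.
case: rp => /allP ap _ ar; apply: ap; apply: mem_nth; by rewrite size_tuple.
Qed.

Lemma s1_mem t : s1 t \in L -> t \in L.
Proof.
case: t => a [i j]; rewrite !mem_rboxes /= => /andP [ar h]; rewrite ar /=.
exact: leq_trans h (part_mono _ (part_mu ar)).
Qed.

Lemma s2_mem t : s2 t \in L -> t \in L.
Proof.
case: t => a [i j]; rewrite !mem_rboxes /= => /andP [ar h]; rewrite ar /=.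
exact: ltnW.
Qed.

Lemma alB1 : aB1 al = mxL (fun t => ind (s1 t)).
Proof. by apply/matrixP => k l; rewrite !mxE. Qed.
Lemma alB2 : aB2 al = mxL (fun t => ind (s2 t)).
Proof. by apply/matrixP => k l; rewrite !mxE. Qed.

Lemma ind_gen (s : trip -> trip) t : (forall t, s t \in L -> t \in L) ->
  ind t *m mxL (fun t => ind (s t)) = ind (s t).
Proof.
move=> sm; rewrite (ind_mxL sL uL); case: ifP => // tL.
by rewrite (ind0 F sL) //; apply/negP => /sm; rewrite tL.
Qed.

Lemma ind_B1 t : ind t *m aB1 al = ind (s1 t).
Proof. by rewrite alB1 ind_gen //; exact: s1_mem. Qed.
Lemma ind_B2 t : ind t *m aB2 al = ind (s2 t).
Proof. by rewrite alB2 ind_gen //; exact: s2_mem. Qed.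

Lemma al_Irow a : Irow (aI al) a = ind (a, (0%N, 0%N)).
Proof.
case: (ltnP a r) => ar.
  rewrite (IrowE _ (Ordinal ar)); apply/rowP => l; rewrite !mxE //.
rewrite Irow_out // (ind0 F sL) //; apply/negP => /rboxes_lt /=.
by rewrite ltnNge ar.
Qed.

Lemma al_wv t : wv (aB1 al) (aB2 al) (aI al) t = ind t.
Proof.
case: t => a [i j].
change (Irow (aI al) a *m aB1 al ^+ i *m aB2 al ^+ j = ind (a, (i, j))).
elim: j => [|j IH].
  rewrite expr0 mulmx1; elim: i => [|i IH]; first by rewrite expr0 mulmx1 al_Irow.
  by rewrite exprSr -mulmxE mulmxA IH ind_B1.
by rewrite exprSr -mulmxE mulmxA IH ind_B2.
Qed.

Lemma al_comm : aB1 al *m aB2 al = aB2 al *m aB1 al.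
Proof.
apply: (mx_ind_eq sL uL) => t _.
by rewrite !mulmxA !ind_B1 !ind_B2 !ind_B1.
Qed.

Lemma al_full (S : 'M[F]_n) : (forall t, t \in L -> (ind t <= S)%MS) -> row_full S.
Proof.
move=> h; rewrite -sub1mx -(mxL_ind F sL uL); apply/row_subP => k.
by rewrite row_mxL h // idx_mem // sL.
Qed.

Lemma al_stable : A_stable al.
Proof.
move=> S IS h1 h2; apply: al_full => t _; rewrite -al_wv; exact: wv_sub.
Qed.

Lemma al_eq : adhm_eq (aB1 al) (aB2 al) (aI al) (aJ al).
Proof. by rewrite /adhm_eq al_comm subrr add0r /= mul0mx. Qed.

Lemma al_point : A_point al.
Proof. by split; [exact: al_eq | exact: al_stable]. Qed.

Definition dg (f : trip -> F) : 'M[F]_n := diag_mx (\row_k f (idx L k)).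

Lemma ind_dg f t : ind t *m dg f = f t *: ind t.
Proof.
case tL: (t \in L); last by rewrite (ind0 F sL) ?tL // mul0mx scaler0.
have ik : (index t L < n)%N by rewrite -sL index_mem.
have e : idx L (Ordinal ik) = t by rewrite /idx nth_index.
by rewrite -e (ind_idx F sL uL) -rowE row_diag_mx mxE.
Qed.

Lemma dg_unit f : (forall t, t \in L -> f t != 0) -> dg f \in unitmx.
Proof.
move=> nz; rewrite unitmxE det_diag unitfE; apply/prodf_neq0 => k _.
by rewrite mxE nz // idx_mem // sL.
Qed.

Lemma dg_B1 (t1 : F) f : (forall t, f t = t1 * f (s1 t)) ->
  dg f *m aB1 al = (t1 *: aB1 al) *m dg f.
Proof.
move=> hf; apply: (mx_ind_eq sL uL) => t _.
by rewrite !mulmxA ind_dg -scalemxAl ind_B1 -scalemxAr -scalemxAl ind_B1 ind_dg scalerA hf.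
Qed.

Lemma dg_B2 (t2 : F) f : (forall t, f t = t2 * f (s2 t)) ->
  dg f *m aB2 al = (t2 *: aB2 al) *m dg f.
Proof.
move=> hf; apply: (mx_ind_eq sL uL) => t _.
by rewrite !mulmxA ind_dg -scalemxAl ind_B2 -scalemxAr -scalemxAl ind_B2 ind_dg scalerA hf.
Qed.

End Alpha.

End A5.
Import A5.

Module A6.
Set Implicit Arguments. Unset Strict Implicit. Unset Printing Implicit Defensive.
Import Order.TTheory GRing.Theory Num.Theory.
Local Open Scope ring_scope.

Section Iso.
Variables (F : closedFieldType) (r n : nat).
Implicit Types (x : adhm F r n) (y : cyc F r n).

Lemma invJ (g : 'M[F]_n) (J J' : 'M[F]_(n, r)) : g \in unitmx ->
  (J' = invmx g *m J) <-> (g *m J' = J).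
Proof.
move=> gu; split=> [->|<-]; by rewrite ?mulKVmx ?mulKmx.
Qed.

Definition isoE x x' (g : 'M[F]_n) :=
  [/\ g *m aB1 x' = aB1 x *m g, g *m aB2 x' = aB2 x *m g,
      aI x' = aI x *m g & g *m aJ x' = aJ x].

Lemma isoA_E x x' : isoA x x' <-> exists2 g, g \in unitmx & isoE x x' g.
Proof.
split=> [[g gu [e1 e2 e3 e4]]|[g gu [e1 e2 e3 e4]]]; exists g => //; split => //.
- exact: conj_eq.
- exact: conj_eq.
- by apply/invJ.
- exact: conj_of.
- exact: conj_of.
- by apply/invJ.
Qed.

Lemma isoA_refl x : isoA x x.
Proof.
apply/isoA_E; exists 1%:M; first exact: unitmx1.
by split; rewrite ?mul1mx ?mulmx1.
Qed.

Lemma isoA_sym x x' : isoA x x' -> isoA x' x.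
Proof.
case/isoA_E => g gu [e1 e2 e3 e4]; apply/isoA_E; exists (invmx g).
  by rewrite unitmx_inv.
split.
- by rewrite (conj_of gu e1) mulmxK.
- by rewrite (conj_of gu e2) mulmxK.
- by rewrite e3 mulmxK.
- by rewrite -e4 mulKmx.
Qed.

Lemma isoA_trans x x' x'' : isoA x x' -> isoA x' x'' -> isoA x x''.
Proof.
case/isoA_E => g gu [e1 e2 e3 e4]; case/isoA_E => h hu [f1 f2 f3 f4].
apply/isoA_E; exists (g *m h); first by rewrite unitmx_mul gu.
split.
- by rewrite -mulmxA f1 mulmxA e1 mulmxA.
- by rewrite -mulmxA f2 mulmxA e2 mulmxA.
- by rewrite f3 e3 mulmxA.
- by rewrite -mulmxA f4 e4.
Qed.

Lemma actA_I t1 t2 (u : 'I_r -> F) x :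
  aI (actA t1 t2 u x) = diag_mx (\row_a (u a)^-1) *m aI x.
Proof. by rewrite mul_diag_mx; apply/matrixP => a k; rewrite !mxE. Qed.

Lemma actA_J t1 t2 (u : 'I_r -> F) x :
  aJ (actA t1 t2 u x) = aJ x *m diag_mx (\row_a (t1 * t2 * u a)).
Proof. by rewrite mul_mx_diag; apply/matrixP => a k; rewrite !mxE mulrC. Qed.

Lemma isoE_act t1 t2 u x x' g : isoE x x' g ->
  isoE (actA t1 t2 u x) (actA t1 t2 u x') g.
Proof.
case=> e1 e2 e3 e4; split.
- by rewrite /= -scalemxAr e1 scalemxAl.
- by rewrite /= -scalemxAr e2 scalemxAl.
- by rewrite !actA_I e3 mulmxA.
- by rewrite !actA_J mulmxA e4.
Qed.

Lemma fixed_transport x x' : isoA x x' -> fixedA_Tr2 x' -> fixedA_Tr2 x.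
Proof.
move=> xx' fx' t1 t2 u h1 h2 hu.
have a1 : isoA (actA t1 t2 u x) (actA t1 t2 u x').
  case/isoA_E: xx' => g gu e; apply/isoA_E; exists g => //; exact: isoE_act.
apply: isoA_trans a1 _; apply: isoA_trans (fx' _ _ _ h1 h2 hu) _.
exact: isoA_sym.
Qed.

Lemma isoQ_forget y y' : isoQ y y' -> isoA (forget y) (forget y').
Proof. by case=> g gu [e1 e2 e3 e4 e5]; exists g. Qed.

Lemma forget_act t1 t2 t3 y :
  actA t1 t2 (Tu t3) (forget y) = forget (actQ t1 t2 t3 y).
Proof.
rewrite /actA /actQ /forget /=; congr ADHM.
by apply/matrixP => a k; rewrite !mxE /Tu invrK.
Qed.

Lemma fixedQ_A y : fixedQ_T y -> fixedA_T (forget y).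
Proof.
move=> fy t1 t2 t3 h1 h2 h3; rewrite forget_act; apply: isoQ_forget; exact: fy.
Qed.

End Iso.

End A6.
Import A6.

Module A7.
Set Implicit Arguments. Unset Strict Implicit. Unset Printing Implicit Defensive.
Import Order.TTheory GRing.Theory Num.Theory.
Local Open Scope ring_scope.

Lemma row_diag_mul (F : fieldType) m p (d : 'rV[F]_m) (A : 'M[F]_(m, p)) i :
  row i (diag_mx d *m A) = d 0 i *: row i A.
Proof. by rewrite row_mul row_diag_mx -scalemxAl -rowE. Qed.

Definition fw (F : fieldType) (t1 t2 : F) (c : nat -> F) (t : trip) :=
  c t.1 / (t1 ^+ t.2.1 * t2 ^+ t.2.2).

Lemma fw1 (F : fieldType) (t1 t2 : F) c t : t1 != 0 -> t2 != 0 ->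
  fw t1 t2 c t = t1 * fw t1 t2 c (s1 t).
Proof.
move=> h1 h2; rewrite /fw /= exprS.
have h3 : t1 ^+ t.2.1 != 0 by rewrite expf_neq0.
have h4 : t2 ^+ t.2.2 != 0 by rewrite expf_neq0.
by field; rewrite ?h1 ?h2 ?h3 ?h4.
Qed.

Lemma fw2 (F : fieldType) (t1 t2 : F) c t : t1 != 0 -> t2 != 0 ->
  fw t1 t2 c t = t2 * fw t1 t2 c (s2 t).
Proof.
move=> h1 h2; rewrite /fw /= exprS.
have h3 : t1 ^+ t.2.1 != 0 by rewrite expf_neq0.
have h4 : t2 ^+ t.2.2 != 0 by rewrite expf_neq0.
by field; rewrite ?h1 ?h2 ?h3 ?h4.
Qed.

Lemma fw00 (F : fieldType) (t1 t2 : F) c a : fw t1 t2 c (a, (0%N, 0%N)) = c a.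
Proof. by rewrite /fw /= !expr0 mulr1 invr1 mulr1. Qed.

Section Alpha2.
Variables (F : closedFieldType) (r n : nat) (mu : r.-tuple (seq nat)).
Hypothesis rp : rpartition n mu.

Local Notation L := (rboxes mu).
Local Notation ind := (ind F n L).
Local Notation mxL := (@A3.mxL F n L _).
Local Notation al := (alpha F n mu).

Definition cfun (u : 'I_r -> F) (a : nat) : F := \sum_(b < r | b == a :> nat) u b.
Lemma cfunE u (b : 'I_r) : cfun u b = u b.
Proof. by rewrite /cfun (big_pred1 b) // => c; exact: (inj_eq val_inj). Qed.

Lemma fw_nz (t1 t2 : F) c : t1 != 0 -> t2 != 0 -> (forall a, (a < r)%N -> c a != 0) ->
  forall t, t \in L -> fw t1 t2 c t != 0.
Proof.
move=> h1 h2 hc t /rboxes_lt tr; rewrite /fw mulf_neq0 ?invr_eq0 ?hc //.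
by rewrite mulf_neq0 // expf_neq0.
Qed.

Lemma al_I_row a : row a (aI al) = ind (val a, (0%N, 0%N)).
Proof. by rewrite -IrowE (al_Irow F rp). Qed.

Lemma al_fixed : fixedA_Tr2 al.
Proof.
move=> t1 t2 u h1 h2 hu; apply/isoA_E.
exists (dg n mu (fw t1 t2 (cfun u))).
  apply: (dg_unit rp); apply: fw_nz => // a ar.
  by rewrite -[a]/(val (Ordinal ar)) cfunE.
split.
- by rewrite /= (@dg_B1 _ _ _ _ rp t1) // => t; rewrite fw1.
- by rewrite /= (@dg_B2 _ _ _ _ rp t2) // => t; rewrite fw2.
- apply/row_matrixP => a; rewrite actA_I row_mul row_diag_mul al_I_row.
  rewrite -scalemxAl (ind_dg rp) scalerA fw00 cfunE mxE mulVf ?scale1r //.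
- by rewrite actA_J /= mulmx0 mul0mx.
Qed.

End Alpha2.

End A7.
Import A7.

Module A8.
Set Implicit Arguments. Unset Strict Implicit. Unset Printing Implicit Defensive.
Import Order.TTheory GRing.Theory Num.Theory.
Local Open Scope ring_scope.

Definition B3al (F : closedFieldType) (r n : nat) (mu : r.-tuple (seq nat)) : 'M[F]_n :=
  @A3.mxL F n (rboxes mu) _ (fun t => ind F n (rboxes mu) (s3 t)).

Definition fcyc (F : closedFieldType) (r n : nat) (mu : r.-tuple (seq nat)) : cyc F r n :=
  CYC (aB1 (alpha F n mu)) (aB2 (alpha F n mu)) (B3al F n mu) (aI (alpha F n mu)) 0.

Section Alpha3.
Variables (F : closedFieldType) (r n : nat) (mu : r.-tuple (seq nat)).
Hypotheses (rp : rpartition n mu) (nm : nested mu).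

Local Notation L := (rboxes mu).
Local Notation ind := (ind F n L).
Local Notation al := (alpha F n mu).

Lemma s3_mem t : s3 t \in L -> t \in L.
Proof.
case: t => a [i j]; rewrite !mem_rboxes /= => /andP [ar h].
have ar' : (a < r)%N := ltnW ar.
rewrite ar' /=; apply: leq_trans h _.
have := @nm (Ordinal ar') ar i; rewrite !(tnth_nth [::]) //.
Qed.

Lemma ind_B3 t : ind t *m B3al F n mu = ind (s3 t).
Proof. by rewrite /B3al (ind_gen F rp) //; exact: s3_mem. Qed.

Lemma fcyc_point : Q_point (fcyc F n mu).
Proof.
split; first exact: (al_eq F rp).
split.
- by rewrite /= mulmx0 mul0mx.
- change (aI al *m B3al F n mu = shiftA F r *m aI al).
  apply/row_matrixP => a; rewrite row_mul (al_I_row F rp) ind_B3.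
  by rewrite -(IrowE (shiftA F r *m aI al) a) Irow_shift (al_Irow F rp).
- change (aB1 al *m B3al F n mu = B3al F n mu *m aB1 al).
  by apply: (mx_ind_eq (sL rp) (uL mu)) => t _; rewrite !mulmxA ind_B3 !(ind_B1 F rp) ind_B3.
- change (aB2 al *m B3al F n mu = B3al F n mu *m aB2 al).
  by apply: (mx_ind_eq (sL rp) (uL mu)) => t _; rewrite !mulmxA ind_B3 !(ind_B2 F rp) ind_B3.
- move=> S IS h1 h2 _ /=; exact: (al_stable rp).
Qed.

Lemma fcyc_forget : isoA (forget (fcyc F n mu)) al.
Proof. exact: isoA_refl. Qed.

Lemma fcyc_fixed : fixedQ_T (fcyc F n mu).
Proof.
move=> t1 t2 t3 h1 h2 h3.
set c := fun a : nat => (t3 ^+ a)^-1.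
set g := dg n mu (fw t1 t2 c).
have gu : g \in unitmx.
  by apply: (dg_unit rp); apply: fw_nz => // a _; rewrite invr_eq0 expf_neq0.
exists g => //; split.
- apply: conj_of => //; rewrite /= (@dg_B1 _ _ _ _ rp t1) // => t; exact: fw1.
- apply: conj_of => //; rewrite /= (@dg_B2 _ _ _ _ rp t2) // => t; exact: fw2.
- apply: conj_of => //; apply: (mx_ind_eq (sL rp) (uL mu)) => t _.
  rewrite /= !mulmxA (ind_dg rp) -scalemxAl ind_B3 -scalemxAr -scalemxAl ind_B3.
  rewrite (ind_dg rp) scalerA; congr (_ *: _).
  rewrite /fw /c /= exprS; field.
  by rewrite !expf_neq0 ?mulf_neq0 ?expf_neq0 ?h1 ?h2 ?h3.
- apply/row_matrixP => a; rewrite row_mul /=.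
  have -> : row a (\matrix_(a0, k) (t3 ^+ a0 * aI al a0 k)) = t3 ^+ a *: row a (aI al).
    by apply/rowP => k; rewrite !mxE.
  rewrite (al_I_row F rp) -scalemxAl (ind_dg rp) scalerA fw00 /c mulfV ?scale1r //.
  by rewrite expf_neq0.
- by apply/matrixP => k a; rewrite !mxE big1 // => l _; rewrite !mxE !mulr0.
Qed.

End Alpha3.

End A8.
Import A8.

Module A9.
Set Implicit Arguments. Unset Strict Implicit. Unset Printing Implicit Defensive.
Import Order.TTheory GRing.Theory Num.Theory.
Local Open Scope ring_scope.

Section Core.
Variables (F : closedFieldType) (r n : nat).
Variables (B1 B2 : 'M[F]_n) (I : 'M[F]_(r, n)) (J : 'M[F]_(n, r)).
Variables (g : 'M[F]_n) (t1 t2 t3 : F).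
Hypotheses (gu : g \in unitmx) (h1 : t1 != 0) (h2 : t2 != 0) (h3 : t3 != 0).
Hypotheses (e1 : g *m B1 = (t1 *: B1) *m g) (e2 : g *m B2 = (t2 *: B2) *m g)
  (e3 : forall a, Irow I a *m g = (t3 ^+ a)^-1 *: Irow I a)
  (e4 : g *m J = J *m diag_mx (\row_a (t1 * t2 * (t3 ^+ a)^-1))).
Hypothesis stab : forall S : 'M[F]_n, (I <= S)%MS -> stablemx S B1 ->
    stablemx S B2 -> row_full S.

Definition lamF (t : trip) : F := (t3 ^+ t.1 * t1 ^+ t.2.1 * t2 ^+ t.2.2)^-1.

Hypothesis hne : forall t (a : 'I_r), lamF t != t1 * t2 * (t3 ^+ a)^-1.

Lemma B1g : B1 *m g = t1^-1 *: (g *m B1).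
Proof. by rewrite e1 -scalemxAl scalerA mulVf ?scale1r. Qed.
Lemma B2g : B2 *m g = t2^-1 *: (g *m B2).
Proof. by rewrite e2 -scalemxAl scalerA mulVf ?scale1r. Qed.

Lemma eigB1 m (V : 'M[F]_(m, n)) lam : V *m g = lam *: V ->
  (V *m B1) *m g = (t1^-1 * lam) *: (V *m B1).
Proof. by move=> h; rewrite -mulmxA B1g -scalemxAr mulmxA h -scalemxAl scalerA. Qed.
Lemma eigB2 m (V : 'M[F]_(m, n)) lam : V *m g = lam *: V ->
  (V *m B2) *m g = (t2^-1 * lam) *: (V *m B2).
Proof. by move=> h; rewrite -mulmxA B2g -scalemxAr mulmxA h -scalemxAl scalerA. Qed.

Lemma lamF1 t : lamF (s1 t) = t1^-1 * lamF t.
Proof. by rewrite /lamF /= exprS -invfM; congr (_^-1); ring. Qed.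
Lemma lamF2 t : lamF (s2 t) = t2^-1 * lamF t.
Proof. by rewrite /lamF /= exprS -invfM; congr (_^-1); ring. Qed.

Definition trk k (t : 'I_r * 'I_k.+1 * 'I_k.+1) : trip := (val t.1.1, (val t.1.2, val t.2)).

Definition Ek k : 'M[F]_n := (\sum_(t : 'I_r * 'I_k.+1 * 'I_k.+1) eigenspace g (lamF (trk t)))%MS.

Lemma Ek_sup k (t : trip) m (V : 'M[F]_(m, n)) : (t.1 < r)%N -> (t.2.1 <= k)%N -> (t.2.2 <= k)%N ->
  V *m g = lamF t *: V -> (V <= Ek k)%MS.
Proof.
case: t => a [i j] /= ar ik jk h.
have ik' : (i < k.+1)%N by []. have jk' : (j < k.+1)%N by [].
apply: (sumsmx_sup (Ordinal ar, Ordinal ik', Ordinal jk')) => //.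
by apply/eigenspaceP.
Qed.

Lemma Ek_eig k (t : 'I_r * 'I_k.+1 * 'I_k.+1) :
  eigenspace g (lamF (trk t)) *m g = lamF (trk t) *: eigenspace g (lamF (trk t)).
Proof. exact/eigenspaceP. Qed.

Lemma Kr_Ek k : (Kr B1 B2 I k <= Ek k)%MS.
Proof.
elim: k => [|k IH] /=.
  rewrite genmxE; apply/row_subP => a.
  apply: (@Ek_sup 0 (val a, (0%N, 0%N))) => /=; rewrite ?ltn_ord //.
  by rewrite -IrowE e3 /lamF /= !expr0 !mulr1.
rewrite !addsmx_sub -andbA; apply/and3P; split.
- apply: submx_trans IH _; apply/sumsmx_subP => t _.
  apply: (@Ek_sup k.+1 (trk t)) => /=; rewrite ?ltn_ord //; try exact: ltnW.
  by apply/eigenspaceP.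
- apply: submx_trans (submxMr _ IH) _; rewrite sumsmxMr; apply/sumsmx_subP => t _.
  apply: (@Ek_sup k.+1 (s1 (trk t))) => /=; rewrite ?ltn_ord //; try exact: ltnW.
  by rewrite lamF1; apply: eigB1; apply/eigenspaceP.
- apply: submx_trans (submxMr _ IH) _; rewrite sumsmxMr; apply/sumsmx_subP => t _.
  apply: (@Ek_sup k.+1 (s2 (trk t))) => /=; rewrite ?ltn_ord //; try exact: ltnW.
  by rewrite lamF2; apply: eigB2; apply/eigenspaceP.
Qed.

Lemma eigJ m (V : 'M[F]_(m, n)) t : V *m g = lamF t *: V -> V *m J = 0.
Proof.
move=> h.
pose D : 'M[F]_r := diag_mx (\row_a (t1 * t2 * (t3 ^+ a)^-1 - lamF t)).
have Du : D \in unitmx.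
  rewrite unitmxE det_diag unitfE; apply/prodf_neq0 => a _.
  by rewrite mxE subr_eq0 eq_sym hne.
have : (V *m J) *m D = 0.
  have -> : D = diag_mx (\row_a (t1 * t2 * (t3 ^+ a)^-1)) - lamF t *: 1%:M.
    apply/matrixP => i j; rewrite !mxE; case: (i == j) => /=; rewrite ?mulr1n ?mulr0n ?mulr1 ?mulr0 //.
    by rewrite subr0.
  rewrite mulmxBr -mulmxA -e4 mulmxA h -scalemxAl -scalemxAr mulmx1 subrr //.
move/(congr1 (mulmx^~ (invmx D))); rewrite mulmxK // mul0mx //.
Qed.

Lemma Kr_full : row_full (Kr B1 B2 I n).
Proof. by apply: stab; [exact: I_Kr | exact: Kr_stable1 | exact: Kr_stable2]. Qed.

Lemma J0 : J = 0.
Proof.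
have full : row_full (Ek n).
  by rewrite -sub1mx (submx_trans _ (Kr_Ek n)) // sub1mx Kr_full.
have : (Ek n <= kermx J)%MS.
  by apply/sumsmx_subP => t _; rewrite sub_kermx (eigJ (Ek_eig t)).
move/(submx_trans (submx_full 1%:M full)); rewrite sub_kermx mul1mx.
by move/eqP.
Qed.


Hypothesis heq : B2 *m B1 - B1 *m B2 + J *m I = 0.
Hypothesis hinj : forall t t', lamF t = lamF t' -> t = t'.

Lemma comm12 : B1 *m B2 = B2 *m B1.
Proof. by move: heq; rewrite J0 mul0mx addr0 => /eqP; rewrite subr_eq0 => /eqP. Qed.

Local Notation w := (wv B1 B2 I).

Lemma wE a i j : w (a, (i, j)) = Irow I a *m B1 ^+ i *m B2 ^+ j.
Proof. by []. Qed.

Lemma w_s1 t : w (s1 t) = w t *m B1.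
Proof.
have c : GRing.comm B1 (B2 ^+ t.2.2) by apply: commrX; rewrite /GRing.comm -!mulmxE comm12.
case: t c => a [i j] c; rewrite /s1 /= !wE exprSr -mulmxE !mulmxA -!(mulmxA (Irow I a *m B1 ^+ i)).
by move: c; rewrite /GRing.comm -!mulmxE => ->.
Qed.

Lemma w_s2 t : w (s2 t) = w t *m B2.
Proof. by case: t => a [i j]; rewrite /s2 /= !wE exprSr -mulmxE mulmxA. Qed.

Lemma w_out t : (r <= t.1)%N -> w t = 0.
Proof. by case: t => a [i j] /= ra; rewrite wE Irow_out // !mul0mx. Qed.

Lemma w_eig t : w t *m g = lamF t *: w t.
Proof.
case: t => a [i j]; elim: j => [|j IH].
  elim: i => [|i IH]; first by rewrite wE !expr0 !mulmx1 e3 /lamF /= !expr0 !mulr1.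
  by rewrite -[(a, (i.+1, 0%N))]/(s1 (a, (i, 0%N))) w_s1 lamF1 (eigB1 IH).
by rewrite -[(a, (i, j.+1))]/(s2 (a, (i, j))) w_s2 lamF2 (eigB2 IH).
Qed.

Lemma w_d1 t : w (s1 t) != 0 -> w t != 0.
Proof. by rewrite w_s1; apply: contraNneq => ->; rewrite mul0mx. Qed.
Lemma w_d2 t : w (s2 t) != 0 -> w t != 0.
Proof. by rewrite w_s2; apply: contraNneq => ->; rewrite mul0mx. Qed.

Lemma count_le (T : seq trip) : uniq T -> (forall t, t \in T -> w t != 0) -> (size T <= n)%N.
Proof.
move=> uT nz.
have := @max_poly_roots _ (char_poly g) (map lamF T).
rewrite size_char_poly size_map ltnS; apply.
- exact: monic_neq0 (char_poly_monic g).
- apply/allP => l /mapP [t tT ->]; rewrite -eigenvalue_root_char.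
  by apply/eigenvalueP; exists (w t); [exact: w_eig | exact: nz].
- by rewrite map_inj_in_uniq // => u v _ _; exact: hinj.
Qed.

Lemma w_bound a i j : w (a, (i, j)) != 0 -> (i < n)%N && (j < n)%N.
Proof.
move=> nz; apply/andP; split.
  have key : forall d k, w (a, ((k + d)%N, j)) != 0 -> w (a, (k, j)) != 0.
    elim=> [|d IH] k; first by rewrite addn0.
    by rewrite addnS => h; apply: IH; apply: (w_d1 (t := (a, ((k + d)%N, j)))).
  have := @count_le [seq (a, (k, j)) | k <- iota 0 i.+1].
  rewrite size_map size_iota; apply.
    by rewrite map_inj_uniq ?iota_uniq // => u v [].
  move=> t /mapP [k]; rewrite mem_iota /= => ki ->.
  by apply: (key (i - k)%N); rewrite subnKC // -ltnS.
have key : forall d k, w (a, (i, (k + d)%N)) != 0 -> w (a, (i, k)) != 0.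
  elim=> [|d IH] k; first by rewrite addn0.
  by rewrite addnS => h; apply: IH; apply: (w_d2 (t := (a, (i, (k + d)%N)))).
have := @count_le [seq (a, (i, k)) | k <- iota 0 j.+1].
rewrite size_map size_iota; apply.
  by rewrite map_inj_uniq ?iota_uniq // => u v [].
move=> t /mapP [k]; rewrite mem_iota /= => kj ->.
by apply: (key (j - k)%N); rewrite subnKC // -ltnS.
Qed.

Definition Pa (a : nat) (i j : nat) := w (a, (i, j)) != 0.

Definition muX : r.-tuple (seq nat) := [tuple dpart (Pa a) n | a < r].

Lemma muX_nth (a : 'I_r) : nth [::] muX a = dpart (Pa a) n.
Proof. by rewrite -(tnth_nth [::]) tnth_mktuple. Qed.

Lemma Pa_d1 a i j : Pa a i.+1 j -> Pa a i j.
Proof. exact: (w_d1 (t := (a, (i, j)))). Qed.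
Lemma Pa_d2 a i j : Pa a i j.+1 -> Pa a i j.
Proof. exact: (w_d2 (t := (a, (i, j)))). Qed.
Lemma Pa_b a i j : Pa a i j -> (i < n)%N && (j < n)%N.
Proof. exact: w_bound. Qed.

Lemma memX t : (t \in rboxes muX) = (w t != 0).
Proof.
case: t => a [i j]; rewrite mem_rboxes.
case: (ltnP a r) => ar /=; last by rewrite w_out ?eqxx.
by rewrite -[a]/(val (Ordinal ar)) muX_nth -dpart_mem //; [exact: Pa_d1|exact: Pa_d2|exact: Pa_b].
Qed.

Local Notation LX := (rboxes muX).

Lemma indX m (sLm : size LX = m) t : ind F m LX t *m @A3.mxL F m LX _ w = w t.
Proof.
rewrite (ind_mxL sLm (uL muX)) memX; case: eqP => // ->.
Qed.

Lemma fullX m (sLm : size LX = m) : row_full (@A3.mxL F m LX _ w).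
Proof.
have wQ : forall t, (w t <= @A3.mxL F m LX _ w)%MS.
  by move=> t; rewrite -(indX sLm) submxMl.
suff : row_full <<@A3.mxL F m LX _ w>>%MS by rewrite /row_full genmxE.
apply: stab; rewrite ?(eqmxMr _ (genmxE _)) genmxE.
- apply/row_subP => a; rewrite -IrowE.
  by have := wQ (val a, (0%N, 0%N)); rewrite wE !expr0 !mulmx1.
- apply/row_subP => k; rewrite row_mul (row_mxL LX) -w_s1; exact: wQ.
- apply/row_subP => k; rewrite row_mul (row_mxL LX) -w_s2; exact: wQ.
Qed.

Lemma sizeX : size LX = n.
Proof.
apply/eqP; rewrite eqn_leq count_le ?uL //=; last by move=> t; rewrite memX.
have := fullX (erefl (size LX)); rewrite /row_full => /eqP <-.
exact: rank_leq_row.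
Qed.

Lemma rpX : rpartition n muX.
Proof.
split; last by rewrite -size_rboxes sizeX.
apply/allP => p /tnthP [a ->]; rewrite tnth_mktuple.
by apply: dpart_part; [exact: Pa_d1|exact: Pa_d2|exact: Pa_b].
Qed.

Lemma isoX : isoA (alpha F n muX) (ADHM B1 B2 I J).
Proof.
pose P := @A3.mxL F n LX _ w.
have Pu : P \in unitmx by rewrite -row_full_unit fullX // sizeX.
apply/isoA_E; exists P => //; split => /=.
- apply: (mx_ind_eq sizeX (uL muX)) => t _.
  by rewrite !mulmxA (indX sizeX) (ind_B1 F rpX) (indX sizeX) w_s1.
- apply: (mx_ind_eq sizeX (uL muX)) => t _.
  by rewrite !mulmxA (indX sizeX) (ind_B2 F rpX) (indX sizeX) w_s2.
- apply/row_matrixP => a; rewrite row_mul (al_I_row F rpX) (indX sizeX).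
  by rewrite wE !expr0 !mulmx1 IrowE.
- by rewrite J0 mulmx0.
Qed.

End Core.

End A9.
Import A9.

Module A10.
Set Implicit Arguments. Unset Strict Implicit. Unset Printing Implicit Defensive.
Import Order.TTheory GRing.Theory Num.Theory.
Local Open Scope ring_scope.

Section Num.
Variables (F : closedFieldType) (charF0 : [pchar F] =i pred0).

Lemma natF_eq0 k : (k%:R == 0 :> F) = (k == 0)%N.
Proof. by have [h _] := pcharf0P F; rewrite h. Qed.

Lemma natF_inj m k : (m%:R = k%:R :> F) -> m = k.
Proof.
wlog mk : m k / (m <= k)%N => [H e|e].
  by case: (leqP m k) => h; [exact: H | apply/esym; apply: H (ltnW h) _].
by apply/eqP; rewrite eqn_leq mk /= -subn_eq0 -natF_eq0 natrB // e subrr.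
Qed.

Definition T1 : F := 2%:R.
Definition T2 : F := 3%:R.
Definition T3 : F := 5%:R.

Lemma T1nz : T1 != 0. Proof. by rewrite natF_eq0. Qed.
Lemma T2nz : T2 != 0. Proof. by rewrite natF_eq0. Qed.
Lemma T3nz : T3 != 0. Proof. by rewrite natF_eq0. Qed.

Definition Nt (t : trip) : nat := (5 ^ t.1 * 2 ^ t.2.1 * 3 ^ t.2.2)%N.

Lemma lamN t : lamF T1 T2 T3 t = (Nt t)%:R^-1.
Proof. by rewrite /lamF /Nt !natrM !natrX. Qed.

Lemma Nt_pos t : (0 < Nt t)%N.
Proof. by rewrite /Nt !muln_gt0 !expn_gt0. Qed.

Lemma logNt p t : prime p -> (p < 6)%N -> p != 4 -> logn p (Nt t) =
  ((p == 5) * t.1 + (p == 2) * t.2.1 + (p == 3) * t.2.2)%N.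
Proof.
move=> pp p6 p4; rewrite /Nt !lognM ?muln_gt0 ?expn_gt0 // !lognX !logn_prime //.
by rewrite ![(_ * (_ == _))%N]mulnC.
Qed.

Lemma Nt_inj t t' : Nt t = Nt t' -> t = t'.
Proof.
move=> e; case: t e => a [i j]; case: t' => a' [i' j'] e.
have := congr1 (logn 5) e; have := congr1 (logn 2) e; have := congr1 (logn 3) e.
rewrite !logNt //= !mul1n !mul0n !addn0 !add0n => -> -> ->; by [].
Qed.

Lemma hinjN t t' : lamF T1 T2 T3 t = lamF T1 T2 T3 t' -> t = t'.
Proof. by rewrite !lamN => /invr_inj /natF_inj /Nt_inj. Qed.

Lemma hneN t (a : nat) : lamF T1 T2 T3 t != T1 * T2 * (T3 ^+ a)^-1.
Proof.
rewrite lamN /T1 /T2 /T3 -natrX -natrM; apply/eqP => e.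
have h1 : (Nt t)%:R != 0 :> F by rewrite natF_eq0 -lt0n Nt_pos.
have h2 : (5 ^ a)%:R != 0 :> F by rewrite natF_eq0 expn_eq0.
have : (5 ^ a)%:R = (2 * 3)%:R * (Nt t)%:R :> F.
  have h6 : (2 * 3)%:R != 0 :> F by rewrite natF_eq0.
  move: e => /(congr1 GRing.inv); rewrite invrK invf_div => ->.
  by rewrite mulrC divfK.
rewrite -natrM => /natF_inj /(congr1 odd).
rewrite oddX !oddM /= orbT => h; discriminate h.
Qed.

End Num.

End A10.
Import A10.

Module A11.
Set Implicit Arguments. Unset Strict Implicit. Unset Printing Implicit Defensive.
Import Order.TTheory GRing.Theory Num.Theory.
Local Open Scope ring_scope.

Section Final.
Variables (F : closedFieldType) (charF0 : [pchar F] =i pred0) (r n : nat).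
Implicit Types (x : adhm F r n) (y : cyc F r n).

Local Notation wx x := (wv (aB1 x) (aB2 x) (aI x)).

Lemma wv_iso x x' g : isoE x x' g -> forall t, wx x' t = wx x t *m g.
Proof.
case=> e1 e2 e3 _ [a [i j]].
change (Irow (aI x') a *m aB1 x' ^+ i *m aB2 x' ^+ j =
        Irow (aI x) a *m aB1 x ^+ i *m aB2 x ^+ j *m g).
elim: j => [|j IH].
  rewrite !expr0 !mulmx1; elim: i => [|i IH]; first by rewrite !expr0 !mulmx1 e3 IrowM.
  by rewrite !exprSr -!mulmxE !mulmxA IH -!mulmxA e1.
by rewrite !exprSr -!mulmxE !mulmxA IH -!mulmxA e2.
Qed.

Lemma classify x : A_point x -> fixedA_T x ->
  aJ x = 0 /\ exists2 mu, rpartition n mu & isoA x (alpha F n mu).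
Proof.
case: x => B1 B2 I J [heq stab] fx.
have := fx (T1 F) (T2 F) (T3 F) (T1nz charF0) (T2nz charF0) (T3nz charF0).
case/isoA_E => g gu [e1 e2 e3 e4].
have e3' : forall a, Irow I a *m g = (T3 F ^+ a)^-1 *: Irow I a.
  move=> a; case: (ltnP a r) => ar; last by rewrite !Irow_out // mul0mx scaler0.
  rewrite -[a]/(val (Ordinal ar)) IrowE.
  move: e3; rewrite actA_I => /(congr1 (row (Ordinal ar))).
  rewrite row_mul row_diag_mul mxE /Tu invrK /= => e.
  rewrite {2}e -scalemxAl scalerA mulVf ?scale1r //.
  by rewrite expf_neq0 // T3nz.
have e4' : g *m J = J *m diag_mx (\row_a (T1 F * T2 F * (T3 F ^+ a)^-1)).
  by rewrite e4 actA_J.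
have hne : forall t (a : 'I_r), lamF (T1 F) (T2 F) (T3 F) t != T1 F * T2 F * (T3 F ^+ a)^-1.
  by move=> t a; exact: hneN.
have J0' : J = 0.
  apply: (@J0 F r n B1 B2 I J g (T1 F) (T2 F) (T3 F)).
  all: try solve [exact: (T1nz charF0) | exact: (T2nz charF0) | exact: (T3nz charF0) | assumption | exact: stab].
split => //; exists (muX B1 B2 I).
  apply: (@rpX F r n B1 B2 I J g (T1 F) (T2 F) (T3 F)).
  all: try solve [exact: (T1nz charF0) | exact: (T2nz charF0) | exact: (T3nz charF0) | assumption | exact: stab | exact: hinjN].
apply: isoA_sym; apply: (@isoX F r n B1 B2 I J g (T1 F) (T2 F) (T3 F)).
all: try solve [exact: (T1nz charF0) | exact: (T2nz charF0) | exact: (T3nz charF0) | assumption | exact: stab | exact: hinjN].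
Qed.

Lemma unit_row_eq0 m (v : 'rV[F]_m) (g : 'M[F]_m) : g \in unitmx -> (v *m g == 0) = (v == 0).
Proof.
move=> gu; apply/eqP/eqP => [h|->]; last by rewrite mul0mx.
by rewrite -(mulmxK gu v) h mul0mx.
Qed.

Lemma memL_ind (mu : r.-tuple (seq nat)) (rp : rpartition n mu) t :
  (t \in rboxes mu) = (ind F n (rboxes mu) t != 0).
Proof.
case tL: (t \in rboxes mu); first by rewrite ind_nz // (sL rp).
by rewrite (ind0 F (sL rp)) ?tL ?eqxx.
Qed.

Lemma ltn_ext a b : (forall j, (j < a)%N = (j < b)%N) -> a = b.
Proof.
move=> h; apply/eqP; rewrite eqn_leq; apply/andP; split; rewrite leqNgt; apply/negP => c.
  by move: (h b); rewrite c ltnn.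
by move: (h a); rewrite c ltnn.
Qed.

Lemma al_inj (mu nu : r.-tuple (seq nat)) : rpartition n mu -> rpartition n nu ->
  isoA (alpha F n mu) (alpha F n nu) -> mu = nu.
Proof.
move=> rpm rpn /isoA_E [g gu e].
have mem : forall t, (t \in rboxes nu) = (t \in rboxes mu).
  move=> t; rewrite (memL_ind rpm) (memL_ind rpn) -(al_wv F rpn) -(al_wv F rpm).
  by rewrite (wv_iso e) unit_row_eq0.
apply: eq_from_tnth => a; rewrite !(tnth_nth [::]).
case: rpm => /allP pm _; case: rpn => /allP pn _.
apply: part_eq; [apply: pm | apply: pn | ]; rewrite ?mem_nth ?size_tuple //.
move=> i; apply: ltn_ext => j.
by have := mem (val a, (i, j)); rewrite !mem_rboxes ltn_ord.
Qed.

Lemma Q_to_A y : Q_point y -> A_point (forget y).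
Proof.
case=> heq [q1 q2 q3 q4 qs]; split => //.
have KB3 : stablemx (Kr (cB1 y) (cB2 y) (cI y) n) (cB3 y).
  by apply: Kr_B3 => //; rewrite q2 submxMl.
have Kf : row_full (Kr (cB1 y) (cB2 y) (cI y) n).
  apply: qs => //; [exact: I_Kr | exact: Kr_stable1 | exact: Kr_stable2].
move=> S IS s1 s2.
have KS : (Kr (cB1 y) (cB2 y) (cI y) n <= S)%MS by apply: Kr_sub.
by rewrite -sub1mx; apply: submx_trans KS; rewrite sub1mx.
Qed.

Lemma wy_s3 y : Q_point y -> forall t,
  wv (cB1 y) (cB2 y) (cI y) (s3 t) = wv (cB1 y) (cB2 y) (cI y) t *m cB3 y.
Proof.
case=> _ [_ q2 q3 q4 _] [a [i j]].
change (Irow (cI y) a.+1 *m cB1 y ^+ i *m cB2 y ^+ j =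
        Irow (cI y) a *m cB1 y ^+ i *m cB2 y ^+ j *m cB3 y).
rewrite -Irow_shift -q2 IrowM -!mulmxA; congr (_ *m _).
have c1 : GRing.comm (cB3 y) (cB1 y ^+ i) by apply: commrX; rewrite /GRing.comm -!mulmxE q3.
have c2 : GRing.comm (cB3 y) (cB2 y ^+ j) by apply: commrX; rewrite /GRing.comm -!mulmxE q4.
move: c1 c2; rewrite /GRing.comm -!mulmxE => c1 c2.
by rewrite mulmxA c1 -mulmxA c2 mulmxA.
Qed.

Lemma nested_of y (mu : r.-tuple (seq nat)) : rpartition n mu -> Q_point y ->
  isoA (forget y) (alpha F n mu) -> nested mu.
Proof.
move=> rp yQ /isoA_E [g gu e].
have wal := wv_iso e.
have s3m : forall t, s3 t \in rboxes mu -> t \in rboxes mu.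
  move=> t; rewrite !(memL_ind rp) -!(al_wv F rp) !wal /= (wy_s3 yQ).
  rewrite !(unit_row_eq0 _ gu); apply: contraNN => /eqP ->; by rewrite mul0mx.
move=> a h i; rewrite !(tnth_nth [::]) /=.
case e0: (nth 0 (nth [::] mu a.+1) i) => [//|c].
have := s3m (val a, (i, c)); rewrite !mem_rboxes /= h e0 ltnSn ltn_ord /=.
by move/(_ isT).
Qed.

End Final.

End A11.
Import A11.

Local Open Scope ring_scope.

Theorem proposition4p1 (F : closedFieldType) (charF0 : [pchar F] =i pred0)
    (r n : nat) :
  (* (i) *)
  (forall x : adhm F r n, A_point x -> (fixedA_T x <-> fixedA_Tr2 x)) /\
  (* (ii) *)
  (forall mu : r.-tuple (seq nat), rpartition n mu ->
     ((exists y : cyc F r n,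
         [/\ Q_point y, fixedQ_T y & isoA (forget y) (alpha F n mu)])
      <-> nested mu)) /\
  (exists f : r.-tuple (seq nat) -> cyc F r n,
     [/\ (forall mu, rpartition n mu -> nested mu ->
            [/\ Q_point (f mu), fixedQ_T (f mu)
              & isoA (forget (f mu)) (alpha F n mu)]),
         (forall y, Q_point y -> fixedQ_T y ->
            exists2 mu, rpartition n mu /\ nested mu & isoQ y (f mu))
       & (forall mu nu, rpartition n mu -> nested mu ->
            rpartition n nu -> nested nu -> isoQ (f mu) (f nu) -> mu = nu)]) /\
  (* (iii) *)
  (forall y : cyc F r n, Q_point y -> fixedQ_T y -> Q0_point y) /\
  (exists f : r.-tuple (seq nat) -> cyc F r n,
     [/\ (forall mu, rpartition n mu -> nested mu ->
            Q0_point (f mu) /\ fixedQ_T (f mu)),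
         (forall y, Q0_point y -> fixedQ_T y ->
            exists2 mu, rpartition n mu /\ nested mu & isoQ y (f mu))
       & (forall mu nu, rpartition n mu -> nested mu ->
            rpartition n nu -> nested nu -> isoQ (f mu) (f nu) -> mu = nu)]).
Proof.
have surj : forall y : cyc F r n, Q_point y -> fixedQ_T y ->
    exists2 mu, rpartition n mu /\ nested mu & isoQ y (fcyc F n mu).
  move=> y yQ yf.
  have [J0 [mu rp iso]] := classify charF0 (Q_to_A yQ) (fixedQ_A yf).
  have nm := nested_of rp yQ iso.
  exists mu => //.
  case/isoA_E: iso => g gu E; have wt := wv_iso E; case: E => e1 e2 e3 e4.
  exists g => //; split.
  - exact: conj_of gu e1.
  - exact: conj_of gu e2.
  - apply: (mx_ind_eq (sL rp) (uL mu)) => t tL.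
    rewrite (ind_B3 F rp nm) -!(al_wv F rp) !wt /= !mulmxA mulmxK //.
    by rewrite (wy_s3 yQ).
  - exact: e3.
  - by move: J0 => /= ->; rewrite mulmx0.
have inj : forall mu nu : r.-tuple (seq nat), rpartition n mu -> nested mu ->
    rpartition n nu -> nested nu -> isoQ (fcyc F n mu) (fcyc F n nu) -> mu = nu.
  by move=> mu nu rpm _ rpn _ /isoQ_forget; apply: al_inj.
split.
  move=> x xA; split => [fx|fx t1 t2 t3 h1 h2 h3].
    have [_ [mu rp iso]] := classify charF0 xA fx.
    exact: fixed_transport iso (al_fixed rp).
  by apply: fx => // a; rewrite /Tu invr_eq0 expf_neq0.
split.
  move=> mu rp; split => [[y [yQ yf iso]]|nm]; first exact: nested_of rp yQ iso.
  exists (fcyc F n mu); split; [exact: fcyc_point | exact: fcyc_fixed | exact: fcyc_forget].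
split.
  exists (fcyc F n); split => //.
  move=> mu rp nm; split; [exact: fcyc_point | exact: fcyc_fixed | exact: fcyc_forget].
split.
  move=> y yQ yf; split => //.
  by have [J0 _] := classify charF0 (Q_to_A yQ) (fixedQ_A yf).
exists (fcyc F n); split => //.
  move=> mu rp nm; split; [split => // | exact: fcyc_fixed].
  exact: fcyc_point.
by move=> y [yQ _] yf; apply: surj.
Qed.
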